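(* Let $r\ge1$ and let $\mathcal{R}$ be a Rouquier block of $\mathcal{A}_e^r$ which is not a core block. Let $(\boldsymbol\lambda,\mathbf{s})\in\mathcal{R}$ and write $\eta(\lambda^{(k)},s_k)=(\boldsymbol\rho^k,\mathbf{t}^k)$ for $1\le k\le r$. Then $\sum_{k=1}^r t^k_{i+1}-\sum_{k=1}^r t^k_i\ge0$ for all $0\le i<e-1$.
   Context: Fix an integer $e\ge 2$. A partition is a weakly decreasing sequence $\lambda=(\lambda_1,\lambda_2,\dots)$ of non-negative integers with finite sum $|\lambda|$; $\Lambda$ denotes the set of partitions and $\Lambda^{(m)}$ the set of $m$-multipartitions, i.e. $m$-tuples $\boldsymbol\lambda=(\lambda^{(1)},\dots,\lambda^{(m)})$ of partitions, with $|\boldsymbol\lambda|=\sum_k|\lambda^{(k)}|$. A $\beta$-set is a subset $B\subseteq\mathbb{Z}$ containing all sufficiently small integers and no sufficiently large ones. For $\lambda\in\Lambda$ and $s\in\mathbb{Z}$ set $B_s(\lambda)=\{\lambda_i-i+s : i\ge 1\}$; every $\beta$-set equals $B_s(\lambda)$ for a unique pair $(\lambda,s)$. Let $\mathcal{A}_e=\Lambda\times\mathbb{Z}$ (abacus configurations with $e$ runners) and $\mathcal{A}_e^m=\Lambda^{(m)}\times\mathbb{Z}^m$. Blocks: for $(\boldsymbol\lambda,\mathbf{s})\in\mathcal{A}_e^m$, its $e$-residue multiset is the multiset of the values $s_k+y-x \bmod e$ over all nodes $(x,y,k)$ with $x\ge1$, $1\le y\le\lambda^{(k)}_x$, $1\le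 k\le m$. Define $(\boldsymbol\lambda,\mathbf{s})\approx_e(\boldsymbol\mu,\mathbf{s}')$ iff $\mathbf{s}=\mathbf{s}'$, $|\boldsymbol\lambda|=|\boldsymbol\mu|$ and the $e$-residue multisets coincide. Its equivalence classes are called blocks. The map $\eta$: for $(\lambda,s)\in\mathcal{A}_e$ with $B=B_s(\lambda)$ and $0\le i<e$, the set $C_i=\{(b-i)/e : b\in B,\ b\equiv i \bmod e\}$ is a $\beta$-set, so $C_i=B_{t_i}(\rho_i)$ for a unique $(\rho_i,t_i)\in\Lambda\times\mathbb{Z}$; set $\eta(\lambda,s)=((\rho_0,\dots,\rho_{e-1}),(t_0,\dots,t_{e-1}))$. The $e$-weight of $\lambda$ is $\mathrm{wt}(\lambda)=\sum_i|\rho_i|$ (it is positive iff $\lambda$ has a removable $e$-rim hook). Rouquier: $(\lambda,s)\in\mathcal{A}_e$ with $\eta(\lambda,s)=(\boldsymbol\rho,\mathbf{t})$ is a Rouquier partition if $\mathrm{wt}(\lambda)\le t_{i+1}-t_i+1$ for all $0\le i<e-1$. $(\boldsymbol\lambda,\mathbf{s})\in\mathcal{A}_e^r$ is a Rouquier multipartition if $(\lambda^{(k)},s_k)$ is a Rouquier partition for every $1\le k\le r$. A block of $\mathcal{A}_e^r$ is a Rouquier block if all its elements are Rouquier multipartitions. A block $\mathcal{R}$ of $\mathcal{A}_e^r$ is a core block if for every $(\boldsymbol\lambda,\mathbf{s})\in\mathcal{R}$ every component $\lambda^{(k)}$ has $e$-weight $0$ (no removable $e$-rim hooks). *)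

(* Defs.v *)
From mathcomp Require Import all_boot all_order all_algebra.
Set Implicit Arguments. Unset Strict Implicit. Unset Printing Implicit Defensive.
Import Order.TTheory GRing.Theory Num.Theory.
Local Open Scope ring_scope.

(* A partition: weakly decreasing finite sequence of positive naturals
   (trailing zeros omitted, so that each partition has a unique representation).
   lambda_i (i >= 1) is  nth 0 l (i-1). *)
Definition is_partition (l : seq nat) : bool :=
  sorted geq l && all (fun x => 0 < x)%N l.

Definition psize (l : seq nat) : nat := sumn l.

Definition in_beta (l : seq nat) (s : int) (b : int) : Prop :=
  exists i : nat, b = (nth 0%N l i)%:Z - (i.+1)%:Z + s.

(* Relational form of eta: eta(lambda,s) = (rho, t) with rho_i, t_i for 0 <= i < e,
   i.e. C_i = { (b - i)/e : b \in B_s(lambda), b = i mod e } = B_{t_i}(rho_i). *)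
Definition eta_rel (e : nat) (l : seq nat) (s : int)
    (rho : nat -> seq nat) (t : nat -> int) : Prop :=
  forall i : nat, (i < e)%N ->
    is_partition (rho i) /\
    (forall c : int, in_beta (rho i) (t i) c <-> in_beta l s (c * e%:Z + i%:Z)).

Definition eweight (e : nat) (rho : nat -> seq nat) : nat :=
  (\sum_(i < e) psize (rho i))%N.

Definition rouquier_partition (e : nat) (l : seq nat) (s : int) : Prop :=
  forall rho t, eta_rel e l s rho t ->
    forall i : nat, (i.+1 < e)%N ->
      (eweight e rho)%:Z <= t i.+1 - t i + 1.

(* e-weight zero (no removable e-rim hook) *)
Definition weight_zero (e : nat) (l : seq nat) (s : int) : Prop :=
  forall rho t, eta_rel e l s rho t -> eweight e rho = 0%N.

Definition is_multipartition (r : nat) (lam : 'I_r -> seq nat) : Prop :=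
  forall k, is_partition (lam k).

Definition msize (r : nat) (lam : 'I_r -> seq nat) : nat :=
  (\sum_(k < r) psize (lam k))%N.

Definition rescount (e r : nat) (lam : 'I_r -> seq nat) (s : 'I_r -> int)
    (j : nat) : nat :=
  (\sum_(k < r) \sum_(x < size (lam k)) \sum_(y < nth 0%N (lam k) x)
     (((s k + (y.+1)%:Z - (x.+1)%:Z) %% e%:Z)%Z == j%:Z : nat))%N.

Definition block_equiv (e r : nat) (lam : 'I_r -> seq nat) (s : 'I_r -> int)
    (mu : 'I_r -> seq nat) (s' : 'I_r -> int) : Prop :=
  (forall k, s k = s' k) /\ msize lam = msize mu /\
  (forall j : nat, (j < e)%N -> rescount e lam s j = rescount e mu s' j).

Definition rouquier_multipartition (e r : nat) (lam : 'I_r -> seq nat)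
    (s : 'I_r -> int) : Prop :=
  forall k, rouquier_partition e (lam k) (s k).

Definition rouquier_block (e r : nat) (lam : 'I_r -> seq nat) (s : 'I_r -> int) : Prop :=
  forall mu s', is_multipartition mu -> block_equiv e lam s mu s' ->
    rouquier_multipartition e mu s'.

Definition core_block (e r : nat) (lam : 'I_r -> seq nat) (s : 'I_r -> int) : Prop :=
  forall mu s', is_multipartition mu -> block_equiv e lam s mu s' ->
    forall k, weight_zero e (mu k) (s' k).

(* Main.v *)
Require Import Defs.
From mathcomp Require Import all_boot all_order all_algebra zify ring.
From Stdlib Require Import Classical ClassicalEpsilon.
Import Order.TTheory GRing.Theory Num.Theory.
Local Open Scope ring_scope.

Lemma in_beta_nil c v : in_beta [::] c v <-> v < c.
Proof.
split; first by case=> i ->; rewrite nth_nil; lia.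
move=> h; exists (absz (c - v - 1)%R); rewrite nth_nil; lia.
Qed.

Lemma in_beta_cons x l c v :
  in_beta (x :: l) (c + 1) v <-> v = x%:Z + c \/ in_beta l c v.
Proof.
split.
  by case=> [[|i]] /= ->; [left; lia | right; exists i; lia].
case=> [->|[i ->]]; first by exists 0%N => /=; lia.
by exists i.+1 => /=; lia.
Qed.

Lemma decode (len : nat) : forall (P : int -> Prop) (lo : int),
  (forall v, v < lo -> P v) -> (forall v, lo + len%:Z <= v -> ~ P v) ->
  exists l c, is_partition l /\ forall v, in_beta l c v <-> P v.
Proof.
elim: len => [|len IH] P lo Hlo Hhi.
  exists [::], lo; split => // v; rewrite in_beta_nil; split; first exact: Hlo.
  move=> Pv; case: (boolP (v < lo)) => // /negP h; exfalso.
  by apply: (Hhi v) => //; lia.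
pose h := lo + len%:Z.
have [l [c [Hl Hb]]] : exists l c, is_partition l /\
    forall v, in_beta l c v <-> (P v /\ v < h).
  apply: (IH _ lo).
    move=> v hv; split; first exact: Hlo.
    rewrite /h; lia.
  by move=> v hv [_ H]; rewrite /h in H; lia.
have Pbig : forall v, P v -> v <= h.
  move=> v Pv; case: (boolP (v <= h)) => // /negP hv; exfalso.
  by apply: (Hhi v) => //; rewrite /h in hv; lia.
case: (classic (P h)) => HPh; last first.
  exists l, c; split => // v; rewrite Hb; split; first by case.
  move=> Pv; split => //; have := Pbig v Pv.
  rewrite le_eqVlt => /orP [/eqP E|//]; by rewrite E in Pv.
have b0 : (nth 0%N l 0)%:Z - 1 + c < h.
  have : in_beta l c ((nth 0%N l 0)%:Z - (0.+1)%:Z + c) by exists 0%N.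
  by rewrite Hb => -[_].
move: Hl; rewrite /is_partition => /andP [Hs Hp].
case: (boolP (h - c == 0)) => [/eqP a0|a0].
  have l0 : l = [::].
    case: l Hs Hp b0 {Hb} => // x l' _ /= /andP [xp _]; lia.
  subst l; exists [::], (c + 1); split => // v.
  rewrite in_beta_nil; split.
    move=> hv; case: (boolP (v < c)) => hvc.
      by have /Hb [] : in_beta [::] c v by rewrite in_beta_nil.
    by have -> : v = h by lia.
  by move=> /Pbig; lia.
exists (absz (h - c)%R :: l), (c + 1); split.
  rewrite /is_partition /= Hp andbT; apply/andP; split; last by lia.
  case: l Hs {Hp Hb} b0 => //= x l' -> /=; rewrite andbT; lia.
move=> v; rewrite in_beta_cons Hb; split.
  case=> [->|[]//]; by have -> : (absz (h - c)%R)%:Z + c = h by lia.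
move=> Pv; have := Pbig v Pv; rewrite le_eqVlt => /orP [/eqP E|hv].
  by left; lia.
by right.
Qed.


Lemma nth_le_sumn (l : seq nat) x : (nth 0%N l x <= sumn l)%N.
Proof. elim: l x => [|a l IH] [|x] //=; [lia | have := IH x; lia]. Qed.

Lemma in_beta_low l s v : v < s - (size l)%:Z -> in_beta l s v.
Proof.
move=> h; exists (absz (s - v - 1)%R); rewrite nth_default; first lia.
lia.
Qed.

Lemma in_beta_high l s v : in_beta l s v -> v < s + (sumn l)%:Z.
Proof. case=> x ->; have := nth_le_sumn l x; lia. Qed.

Lemma runner_ex (e : nat) (he : (0 < e)%N) (l : seq nat) (s : int) (i : nat) :
  exists p : seq nat * int, is_partition p.1 /\
    forall c, in_beta p.1 p.2 c <-> in_beta l s (c * e%:Z + i%:Z).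
Proof.
pose lo : int := - ((absz s)%:Z + (size l)%:Z + i%:Z).
pose len : nat := (absz s + size l + i + absz s + sumn l)%N.
have D1 : forall v, v < lo -> in_beta l s (v * e%:Z + i%:Z).
  move=> v hv; apply: in_beta_low; rewrite /lo in hv; nia.
have D2 : forall v, lo + len%:Z <= v -> ~ in_beta l s (v * e%:Z + i%:Z).
  move=> v hv /in_beta_high; rewrite /lo /len in hv; nia.
have [l' [c [H1 H2]]] := decode len (fun c => in_beta l s (c * e%:Z + i%:Z)) lo D1 D2.
by exists (l', c).
Qed.

Definition rpair e (he : (0 < e)%N) l s i := proj1_sig (constructive_indefinite_description _ (runner_ex e he l s i)).

Lemma eta_exists (e : nat) (he : (0 < e)%N) (l : seq nat) (s : int) :
  exists rho t, eta_rel e l s rho t.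
Proof.
exists (fun i => (rpair e he l s i).1), (fun i => (rpair e he l s i).2) => i _.
rewrite /rpair; case: constructive_indefinite_description => p [H1 H2] /=.
by split.
Qed.

Lemma term_le_sum (n : nat) (F : nat -> nat) i : (i < n)%N -> (F i <= \sum_(j < n) F j)%N.
Proof.
move=> hi; rewrite (bigD1 (Ordinal hi)) //=; exact: leq_addr.
Qed.

Lemma enc (e : nat) (he : (0 < e)%N) (rho : nat -> seq nat) (t : nat -> int) :
  (forall i, (i < e)%N -> is_partition (rho i)) ->
  exists l c, is_partition l /\ eta_rel e l c rho t.
Proof.
move=> Hr.
pose K : nat := (\sum_(i < e) (absz (t i) + size (rho i) + sumn (rho i)))%N.
pose P v := in_beta (rho (absz (v %% e%:Z)%Z)) (t (absz (v %% e%:Z)%Z)) (v %/ e%:Z)%Z.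
have dm : forall v : int, v = (v %/ e%:Z)%Z * e%:Z + (v %% e%:Z)%Z /\
   0 <= (v %% e%:Z)%Z < e%:Z.
  move=> v; split; first exact: divz_eq.
  by rewrite modz_ge0 ?ltz_pmod //; lia.
have KK : forall i, (i < e)%N -> (absz (t i) + size (rho i) + sumn (rho i) <= K)%N.
  move=> i hi; rewrite /K. apply: (term_le_sum e (fun i => absz (t i) + size (rho i) + sumn (rho i))%N i hi).
have D1 : forall v, v < - (K%:Z * e%:Z) - e%:Z -> P v.
  move=> v hv; rewrite /P; apply: in_beta_low.
  have [E /andP [r0 r1]] := dm v.
  have HK := KK (absz (v %% e%:Z)%Z) (ltac:(lia)).
  move: (v %/ e%:Z)%Z (v %% e%:Z)%Z E r0 r1 HK hv => q r E r0 r1 HK hv.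
  move: (t (absz r)) (size (rho (absz r))) (sumn (rho (absz r))) HK => T S1 S2 HK.
  have : q < - K%:Z by nia.
  lia.
have D2 : forall v, - (K%:Z * e%:Z) - e%:Z + (2 * K * e + 2 * e)%N%:Z <= v -> ~ P v.
  move=> v hv; rewrite /P => /in_beta_high.
  have [E /andP [r0 r1]] := dm v.
  have HK := KK (absz (v %% e%:Z)%Z) (ltac:(lia)).
  move: (v %/ e%:Z)%Z (v %% e%:Z)%Z E r0 r1 HK hv => q r E r0 r1 HK hv.
  move: (t (absz r)) (size (rho (absz r))) (sumn (rho (absz r))) HK => T S1 S2 HK.
  have : K%:Z <= q by nia.
  lia.
have [l [c [H1 H2]]] := decode (2 * K * e + 2 * e)%N P (- (K%:Z * e%:Z) - e%:Z) D1 D2.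
exists l, c; split => // i hi; split; first exact: Hr.
move=> c'; rewrite H2 /P.
have -> : ((c' * e%:Z + i%:Z) %% e%:Z)%Z = i%:Z.
  by rewrite modzMDl modz_small //; lia.
have -> : ((c' * e%:Z + i%:Z) %/ e%:Z)%Z = c'.
  rewrite divzMDl ?divz_small; [by rewrite addr0| lia| lia].
by [].
Qed.


Definition bx (l : seq nat) (s : int) (x : nat) : int := (nth 0%N l x)%:Z - (x.+1)%:Z + s.

Lemma nth_geq l x y : sorted geq l -> (x <= y)%N -> (nth 0 l y <= nth 0 l x)%N.
Proof.
move=> Hs hxy; case: (ltnP y (size l)) => hy; last by rewrite nth_default.
have := @sorted_leq_nth _ geq (fun a b c h1 h2 => leq_trans h2 h1) (@leqnn) 0%N l Hs x y.
apply; rewrite ?inE //; exact: leq_ltn_trans hxy hy.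
Qed.

Lemma bx_lt l s x y : sorted geq l -> (x < y)%N -> bx l s y < bx l s x.
Proof. move=> Hs h; have := nth_geq l x y Hs (ltnW h); rewrite /bx; lia. Qed.

Lemma bx_inj l s x y : sorted geq l -> bx l s x = bx l s y -> x = y.
Proof.
move=> Hs E; case: (ltngtP x y) => // h.
  by have := bx_lt l s x y Hs h; rewrite E ltxx.
by have := bx_lt l s y x Hs h; rewrite E ltxx.
Qed.

Lemma mem_L l s N v : sorted geq l -> (size l <= N)%N ->
  (v \in map (bx l s) (iota 0 N)) <-> (s - N%:Z <= v /\ in_beta l s v).
Proof.
move=> Hs HN; split.
  case/mapP => x; rewrite mem_iota add0n => /andP [_ hx] ->.
  by split; [rewrite /bx; lia | exists x].
case=> h [x Ex]; have Ex' : v = bx l s x by [].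
case: (ltnP x N) => hx.
  by rewrite Ex'; apply: map_f; rewrite mem_iota.
move: Ex; rewrite nth_default; first lia.
exact: leq_trans HN hx.
Qed.

Lemma uniq_L l s N : sorted geq l -> uniq (map (bx l s) (iota 0 N)).
Proof.
move=> Hs; rewrite map_inj_uniq ?iota_uniq //; move=> x y; exact: bx_inj.
Qed.

Lemma PoszSum (T : Type) (r : seq T) (F : T -> nat) :
  (\sum_(i <- r) F i)%N%:Z = \sum_(i <- r) (F i)%:Z.
Proof. elim: r => [|a r IH]; by rewrite ?big_nil ?big_cons // PoszD IH. Qed.

Lemma sum_nth l N : (size l <= N)%N ->
  \sum_(y <- iota 0 N) (nth 0%N l y)%:Z = (sumn l)%:Z.
Proof.
move=> HN; rewrite -PoszSum; congr Posz.
rewrite -(subnKC HN) iotaD big_cat /= add0n.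
rewrite [X in (_ + X)%N]big1_seq ?addn0; last first.
  by move=> y /andP [_]; rewrite mem_iota => /andP [hy _]; rewrite nth_default.
by rewrite sumnE [RHS](big_nth 0%N) /index_iota subn0.
Qed.

Definition Rl (e : nat) (rho : nat -> seq nat) (t : nat -> int) (M : int) :=
  flatten [seq [seq bx (rho i) (t i) y * e%:Z + i%:Z | y <- iota 0 (absz (t i - M)%R)] | i <- iota 0 e].

Lemma uniq_flat (e : nat) (f : nat -> seq int) (I : seq nat) : uniq I ->
  (forall i, i \in I -> uniq (f i)) ->
  (forall i v, i \in I -> v \in f i -> (v %% e%:Z)%Z = i%:Z) ->
  uniq (flatten (map f I)).
Proof.
elim: I => [|i I IH] //= /andP [hi hI] Hu Hr.
rewrite cat_uniq Hu ?mem_head // IH //; first last.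
- by move=> j v hj; apply: Hr; rewrite in_cons hj orbT.
- by move=> j hj; apply: Hu; rewrite in_cons hj orbT.
rewrite andbT; apply/hasPn => v /flattenP [ss /mapP [j hj ->] hv].
apply/negP => hv'.
have E1 := Hr i v (mem_head _ _) hv'.
have E2 : (v %% e%:Z)%Z = j%:Z by apply: Hr => //; rewrite in_cons hj orbT.
move: E1; rewrite E2 => -[Eij]; subst j.
by rewrite hj in hi.
Qed.

Lemma mem_R e l s rho t M v : (0 < e)%N -> eta_rel e l s rho t ->
  (forall i, (i < e)%N -> M <= t i - (size (rho i))%:Z) ->
  (v \in Rl e rho t M) <-> (M * e%:Z <= v /\ in_beta l s v).
Proof.
move=> he Heta HM; split.
  case/flattenP => ss /mapP [i]; rewrite mem_iota add0n => /andP [_ hi] -> /mapP [c hc ->].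
  have [Hp Hb] := Heta i hi; case/andP: Hp => Hs _.
  have HMi := HM i hi.
  move: hc; rewrite mem_iota add0n => /andP [_ hc].
  split; last by apply/Hb; exists c.
  have : M <= bx (rho i) (t i) c by rewrite /bx; lia.
  nia.
case=> h1 h2.
have [E /andP [r0 r1]] : v = (v %/ e%:Z)%Z * e%:Z + (v %% e%:Z)%Z /\ 0 <= (v %% e%:Z)%Z < e%:Z.
  split; first exact: divz_eq.
  by rewrite modz_ge0 ?ltz_pmod //; lia.
set c := (v %/ e%:Z)%Z in E; set r := (v %% e%:Z)%Z in E r0 r1.
pose i := absz r.
have hi : (i < e)%N by rewrite /i; lia.
have Er : r = i%:Z by rewrite /i; lia.
have [Hp Hb] := Heta i hi; case/andP: Hp => Hs _.
have HMi := HM i hi.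
have hcM : M <= c by nia.
have : in_beta (rho i) (t i) c by apply/Hb; rewrite -Er -E.
case=> y Ey.
have hy : (y < absz (t i - M)%R)%N.
  case: (ltnP y (absz (t i - M)%R)) => // hy; exfalso.
  move: Ey; rewrite nth_default; first lia.
  lia.
apply/flattenP; exists [seq bx (rho i) (t i) y * e%:Z + i%:Z | y <- iota 0 (absz (t i - M)%R)].
  by apply: (map_f (fun i => [seq bx (rho i) (t i) y * e%:Z + i%:Z | y <- iota 0 (absz (t i - M)%R)])); rewrite mem_iota.
apply/mapP; exists y; first by rewrite mem_iota.
by rewrite E Er /bx -Ey.
Qed.


Lemma iota_ord (n : nat) (F : nat -> int) : \sum_(i <- iota 0 n) F i = \sum_(i < n) F i.
Proof. by rewrite -(big_mkord xpredT) /index_iota subn0. Qed.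

Lemma sum_const_iota (c : int) a n : \sum_(y <- iota a n) c = c * n%:Z.
Proof.
elim: n a => [|n IH] a; first by rewrite big_nil mulr0.
by rewrite /= big_cons IH; nia.
Qed.

Lemma sum_id e l s rho t M (g : int -> int) : (0 < e)%N -> is_partition l ->
  eta_rel e l s rho t -> M * e%:Z <= s - (size l)%:Z ->
  (forall i, (i < e)%N -> M <= t i - (size (rho i))%:Z) ->
  \sum_(x <- iota 0 (absz (s - M * e%:Z)%R)) g (bx l s x) =
  \sum_(i <- iota 0 e) \sum_(y <- iota 0 (absz (t i - M)%R)) g (bx (rho i) (t i) y * e%:Z + i%:Z).
Proof.
move=> he Hl Heta HMl HM.
case/andP: (Hl) => Hs _.
rewrite -(big_map (bx l s) xpredT g).
rewrite (perm_big (Rl e rho t M)); last first.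
  apply: uniq_perm; first exact: uniq_L.
    apply: (uniq_flat e); first exact: iota_uniq.
      move=> i; rewrite mem_iota add0n => /andP [_ hi].
      have [Hpi _] := Heta i hi; case/andP: Hpi => Hsi _.
      rewrite map_inj_uniq ?iota_uniq // => x y Exy.
      apply: (bx_inj (rho i) (t i) x y Hsi).
      have : (bx (rho i) (t i) x - bx (rho i) (t i) y) * e%:Z = 0 by rewrite mulrBl; lia.
      move/eqP; rewrite mulf_eq0 subr_eq0 => /orP [/eqP //|]; lia.
    move=> i v; rewrite mem_iota add0n => /andP [_ hi] /mapP [y _ ->].
    by rewrite modzMDl modz_small //; lia.
  have hN : (size l <= absz (s - M * e%:Z)%R)%N by lia.
  move=> v; apply/idP/idP => h.
    apply/(mem_R _ _ _ _ _ _ v he Heta HM).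
    have [h1 h2] := (mem_L _ _ _ v Hs hN).1 h.
    split => //; lia.
  have [h1 h2] := (mem_R _ _ _ _ _ _ v he Heta HM).1 h.
  apply/(mem_L _ _ _ v Hs hN); split => //; lia.
rewrite /Rl big_flatten /= big_map; apply: eq_bigr => i _.
by rewrite big_map.
Qed.

Definition Gj (e j : nat) (v : int) : int := ((v - j%:Z) %/ e%:Z)%Z.

Lemma divz_sm (e : nat) (m : int) : (0 < e)%N -> - (e%:Z) <= m < e%:Z ->
  (m %/ e%:Z)%Z = if 0 <= m then 0 else -1.
Proof.
move=> he /andP [h1 h2]; case: ifP => h0.
  by rewrite divz_small //; lia.
have -> : m = -1 * e%:Z + (m + e%:Z) by ring.
rewrite divzMDl ?divz_small; [by rewrite addr0 | lia | lia].
Qed.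

Lemma dmz (e : nat) (v : int) : (0 < e)%N ->
  v = (v %/ e%:Z)%Z * e%:Z + (v %% e%:Z)%Z /\ 0 <= (v %% e%:Z)%Z < e%:Z.
Proof.
move=> he; split; first exact: divz_eq.
by rewrite modz_ge0 ?ltz_pmod //; lia.
Qed.

Lemma GjM e j c i : (0 < e)%N -> (i < e)%N -> (j < e)%N ->
  Gj e j (c * e%:Z + i%:Z) = c - ((i < j)%N : nat)%:Z.
Proof.
move=> he hi hj; rewrite /Gj.
have -> : c * e%:Z + i%:Z - j%:Z = c * e%:Z + (i%:Z - j%:Z) by ring.
rewrite divzMDl ?divz_sm //; last lia; last lia.
by case: ifP; case: ltnP => //; lia.
Qed.

Lemma G_step e j v : (0 < e)%N -> (j < e)%N ->
  Gj e j v - Gj e j (v - 1) = (((v %% e%:Z)%Z == j%:Z) : nat)%:Z.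
Proof.
move=> he hj; have [E /andP [r0 r1]] := dmz e v he.
rewrite /Gj.
move: (v %/ e%:Z)%Z (v %% e%:Z)%Z E r0 r1 => q r E r0 r1.
have -> : v - j%:Z = q * e%:Z + (r - j%:Z) by rewrite E; ring.
have -> : v - 1 - j%:Z = q * e%:Z + (r - j%:Z - 1) by rewrite E; ring.
rewrite !divzMDl ?divz_sm //; try lia.
case: ifP; case: ifP; case: eqP; lia.
Qed.

Lemma row_count e j a n : (0 < e)%N -> (j < e)%N ->
  (\sum_(y < n) (((a + y%:Z) %% e%:Z)%Z == j%:Z : nat))%N%:Z =
  Gj e j (a + n%:Z - 1) - Gj e j (a - 1).
Proof.
move=> he hj; elim: n => [|n IH]; first by rewrite big_ord0 addr0 subrr.
rewrite big_ord_recr /= PoszD IH.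
have := G_step e j (a + n%:Z) he hj.
have -> : a + (n.+1)%:Z - 1 = a + n%:Z by lia.
move=> <-; ring.
Qed.

Definition rc (e : nat) (l : seq nat) (s : int) (j : nat) : nat :=
  \sum_(x < size l) \sum_(y < nth 0%N l x)
     (((s + (y.+1)%:Z - (x.+1)%:Z) %% e%:Z)%Z == j%:Z : nat).

Lemma rescount_rc e r (lam : 'I_r -> seq nat) s j : rescount e lam s j = (\sum_(k < r) rc e (lam k) (s k) j)%N.
Proof. by []. Qed.

Lemma rc_N e l s j N : (0 < e)%N -> (j < e)%N -> (size l <= N)%N ->
  (rc e l s j)%:Z = \sum_(x <- iota 0 N) (Gj e j (bx l s x) - Gj e j (s - (x.+1)%:Z)).
Proof.
move=> he hj HN; rewrite /rc PoszSum.
have -> : \sum_(i < size l) (\sum_(y < nth 0%N l i)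
     (((s + (y.+1)%:Z - (i.+1)%:Z) %% e%:Z)%Z == j%:Z : nat))%N%:Z =
   \sum_(i < size l) (Gj e j (bx l s i) - Gj e j (s - (i.+1)%:Z)).
  apply: eq_bigr => x _.
  have -> : (\sum_(y < nth 0%N l x)
     (((s + (y.+1)%:Z - (x.+1)%:Z) %% e%:Z)%Z == j%:Z : nat))%N =
     (\sum_(y < nth 0%N l x) ((((s - x%:Z) + y%:Z) %% e%:Z)%Z == j%:Z : nat))%N.
    apply: eq_bigr => y _.
    by have -> : s + (y.+1)%:Z - (x.+1)%:Z = (s - x%:Z) + y%:Z by lia.
  rewrite row_count //.
  have -> : s - x%:Z + (nth 0%N l x)%:Z - 1 = bx l s x by rewrite /bx; lia.
  by have -> : s - x%:Z - 1 = s - (x.+1)%:Z by lia.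
rewrite -(iota_ord (size l) (fun x => Gj e j (bx l s x) - Gj e j (s - (x.+1)%:Z))) -(subnKC HN) iotaD big_cat /= add0n.
rewrite [X in _ = _ + X]big1_seq ?addr0 //.
move=> y /andP [_]; rewrite mem_iota => /andP [hy _].
rewrite /bx nth_default //; have -> : 0%N%:Z - (y.+1)%:Z + s = s - (y.+1)%:Z by ring. by rewrite subrr.
Qed.

Definition Phi (e : nat) (t : nat -> int) (M : int) (j : nat) : int :=
  \sum_(i <- iota 0 e) (\sum_(y <- iota 0 (absz (t i - M)%R)) (t i - (y.+1)%:Z)
     - ((i < j)%N : nat)%:Z * (absz (t i - M)%R)%:Z).

Definition Cs (e : nat) (s M : int) (j : nat) : int :=
  \sum_(x <- iota 0 (absz (s - M * e%:Z)%R)) Gj e j (s - (x.+1)%:Z).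

Lemma eweightZ e rho : (eweight e rho)%:Z = \sum_(i <- iota 0 e) (psize (rho i))%:Z.
Proof. by rewrite iota_ord /eweight PoszSum. Qed.

Lemma F1 e l s rho t M j : (0 < e)%N -> (j < e)%N -> is_partition l ->
  eta_rel e l s rho t -> M * e%:Z <= s - (size l)%:Z ->
  (forall i, (i < e)%N -> M <= t i - (size (rho i))%:Z) ->
  (rc e l s j)%:Z = (eweight e rho)%:Z + Phi e t M j - Cs e s M j.
Proof.
move=> he hj Hl Heta HMl HM.
rewrite (rc_N e l s j (absz (s - M * e%:Z)%R)) //; last by lia.
rewrite sumrB (sum_id e l s rho t M (Gj e j)) // /Cs; congr (_ - _).
rewrite eweightZ /Phi -big_split /=; apply: eq_big_seq => i.
rewrite mem_iota add0n => /andP [_ hi].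
have [Hpi _] := Heta i hi.
have HMi := HM i hi.
rewrite (eq_bigr (fun y => (nth 0%N (rho i) y)%:Z + (t i - (y.+1)%:Z) - ((i < j)%N : nat)%:Z)); last first.
  by move=> y _; rewrite GjM // /bx; ring.
rewrite sumrB big_split /= sum_nth; last by lia.
rewrite sum_const_iota; ring.
Qed.

Lemma Phi_diff e t M j : (j.+1 < e)%N ->
  Phi e t M j - Phi e t M j.+1 = (absz (t j - M)%R)%:Z.
Proof.
move=> hj; rewrite /Phi -sumrB.
rewrite (eq_bigr (fun i => ((i == j) : nat)%:Z * (absz (t i - M)%R)%:Z)); last first.
  move=> i _.
  have -> : ((i < j.+1)%N : nat) = (((i < j)%N : nat) + ((i == j) : nat))%N.
    rewrite ltnS leq_eqVlt; case: eqP => [->|//]; lia.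
  rewrite PoszD; ring.
rewrite iota_ord (bigD1 (Ordinal (ltnW hj))) //= eqxx big1 ?addr0 /=; first by rewrite mul1r.
move=> i /eqP hi; case: eqP => h; last by rewrite mul0r.
by exfalso; apply: hi; apply: val_inj.
Qed.


Definition cb (e : nat) (l : seq nat) (s : int) (rho : nat -> seq nat) (t : nat -> int) : nat :=
  (absz s + size l + \sum_(i < e) (absz (t i) + size (rho i)))%N.

Lemma cb_ok e l s rho t M : (0 < e)%N -> M <= - (cb e l s rho t)%:Z ->
  M * e%:Z <= s - (size l)%:Z /\ forall i, (i < e)%N -> M <= t i - (size (rho i))%:Z.
Proof.
move=> he; rewrite /cb => hM; split; first nia.
move=> i hi; have := term_le_sum e (fun i => absz (t i) + size (rho i))%N i hi.
lia.
Qed.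

Lemma I1 e l s rho t : (0 < e)%N -> is_partition l -> eta_rel e l s rho t ->
  s = \sum_(i < e) t i.
Proof.
move=> he Hl Heta.
have [H1 H2] := cb_ok e l s rho t (- (cb e l s rho t)%:Z) he (lexx _).
have := sum_id e l s rho t _ (fun _ => 1) he Hl Heta H1 H2.
rewrite sum_const_iota (eq_bigr (fun i => (absz (t i - (- (cb e l s rho t)%:Z))%R)%:Z)); last first.
  by move=> i _; rewrite sum_const_iota mul1r.
rewrite iota_ord.
rewrite (eq_bigr (fun i : 'I_e => t i + (cb e l s rho t)%:Z)); last first.
  move=> i _; have := H2 i (ltn_ord i) => h.
  have HH : ((absz (t i - - (cb e l s rho t)%:Z)%R)%:Z : int) = t i + (cb e l s rho t)%:Z by clear -h; move: h; lia.
  exact: HH.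
rewrite big_split /= sumr_const card_ord => E.
have H1' : (- (cb e l s rho t)%:Z) * e%:Z <= s - (size l)%:Z := H1.
rewrite -mulr_natr natz mul1r in E.
clear -H1' E; move: H1' E; move: (\sum_(i < e) t i) (cb e l s rho t) => S K. nia.
Qed.

Lemma sum_ind_one e (m : int) : (0 < e)%N ->
  (\sum_(j < e) (((m %% e%:Z)%Z == j%:Z) : nat))%N = 1%N.
Proof.
move=> he; have [_ /andP [r0 r1]] := dmz e m he.
have hr : (absz (m %% e%:Z)%Z < e)%N by lia.
rewrite (bigD1 (Ordinal hr)) //= big1 ?addn0.
  by have -> : (m %% e%:Z)%Z == (absz (m %% e%:Z)%Z)%:Z by apply/eqP; lia.
move=> j /eqP hj; case: eqP => // E; exfalso; apply: hj; apply: val_inj => /=; lia.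
Qed.

Lemma F6 e l s : (0 < e)%N -> psize l = (\sum_(j < e) rc e l s j)%N.
Proof.
move=> he; rewrite /rc exchange_big /=.
rewrite (eq_bigr (fun x : 'I_(size l) => nth 0%N l x)); last first.
  move=> x _; rewrite exchange_big /=.
  rewrite (eq_bigr (fun _ => 1%N)); last by move=> y _; rewrite sum_ind_one.
  by rewrite sum_nat_const card_ord muln1.
by rewrite /psize sumnE (big_nth 0%N) big_mkord.
Qed.


Lemma term_le_sumI r (F : 'I_r -> nat) k : (F k <= \sum_(k' < r) F k')%N.
Proof. rewrite (bigD1 k) //=; exact: leq_addr. Qed.

Lemma multi_formula e r (lam : 'I_r -> seq nat) s RH T M j : (0 < e)%N -> (j < e)%N ->
  is_multipartition lam -> (forall k, eta_rel e (lam k) (s k) (RH k) (T k)) ->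
  (forall k, M <= - (cb e (lam k) (s k) (RH k) (T k))%:Z) ->
  (rescount e lam s j)%:Z =
  \sum_(k < r) ((eweight e (RH k))%:Z + Phi e (T k) M j - Cs e (s k) M j).
Proof.
move=> he hj Hm Heta HM; rewrite rescount_rc PoszSum; apply: eq_bigr => k _.
have [H1 H2] := cb_ok _ _ _ _ _ _ he (HM k).
exact: F1.
Qed.

Lemma key_diff e r (lam : 'I_r -> seq nat) s RH T M j : (0 < e)%N -> (j.+1 < e)%N ->
  is_multipartition lam -> (forall k, eta_rel e (lam k) (s k) (RH k) (T k)) ->
  (forall k, M <= - (cb e (lam k) (s k) (RH k) (T k))%:Z) ->
  \sum_(k < r) T k j = (rescount e lam s j)%:Z - (rescount e lam s j.+1)%:Z +
     \sum_(k < r) (M + Cs e (s k) M j - Cs e (s k) M j.+1).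
Proof.
move=> he hj Hm Heta HM.
rewrite (multi_formula e r lam s RH T M j) ?(ltnW hj) //.
rewrite (multi_formula e r lam s RH T M j.+1) //.
rewrite -sumrB -big_split /=; apply: eq_bigr => k _.
have [H1 H2] := cb_ok _ _ _ _ _ _ he (HM k).
have := H2 j (ltnW hj); have := Phi_diff e (T k) M j hj.
move: (Phi e (T k) M j) (Phi e (T k) M j.+1) (Cs e (s k) M j) (Cs e (s k) M j.+1) => a b c d.
move: (eweight e (RH k)) (T k j) (size (RH k j)) => w x y.
lia.
Qed.

Lemma pick_M r (f g : 'I_r -> nat) : exists M : int, forall k, M <= - (f k)%:Z /\ M <= - (g k)%:Z.
Proof.
exists (- ((\sum_(k < r) f k)%N + (\sum_(k < r) g k)%N)%:Z) => k.
have := term_le_sumI r f k; have := term_le_sumI r g k.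
move: (\sum_(k < r) f k)%N (\sum_(k < r) g k)%N => A B; lia.
Qed.

Lemma tsum_inv e r (lam mu : 'I_r -> seq nat) s s' RH T RH' T' : (0 < e)%N ->
  is_multipartition lam -> is_multipartition mu -> block_equiv e lam s mu s' ->
  (forall k, eta_rel e (lam k) (s k) (RH k) (T k)) ->
  (forall k, eta_rel e (mu k) (s' k) (RH' k) (T' k)) ->
  forall j, (j < e)%N -> \sum_(k < r) T k j = \sum_(k < r) T' k j.
Proof.
move=> he Hl Hm [Hs [Hsz Hrc]] Heta Heta' j hj.
have [M HM] := pick_M r (fun k => cb e (lam k) (s k) (RH k) (T k))
                        (fun k => cb e (mu k) (s' k) (RH' k) (T' k)).
have small : forall j, (j.+1 < e)%N -> \sum_(k < r) T k j = \sum_(k < r) T' k j.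
  move=> j' hj'.
  rewrite (key_diff e r lam s RH T M j') //; last by move=> k; case: (HM k).
  rewrite (key_diff e r mu s' RH' T' M j') //; last by move=> k; case: (HM k).
  rewrite !Hrc ?(ltnW hj') //.
  by congr (_ + _); apply: eq_bigr => k _; rewrite Hs.
case: (ltnP j.+1 e) => hj1; first exact: small.
have Ej : j = e.-1 by lia.
clear Hrc Hsz.
case: e he hj hj1 Heta Heta' small HM Ej => [//|e'] he hj hj1 Heta Heta' small HM Ej.
rewrite /= in Ej; subst j.
have S1 : \sum_(k < r) s k = \sum_(i < e'.+1) \sum_(k < r) T k i.
  rewrite exchange_big /=; apply: eq_bigr => k _.
  exact: (I1 e'.+1 (lam k) (s k) (RH k) (T k) he (Hl k) (Heta k)).
have S2 : \sum_(k < r) s' k = \sum_(i < e'.+1) \sum_(k < r) T' k i.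
  rewrite exchange_big /=; apply: eq_bigr => k _.
  exact: (I1 e'.+1 (mu k) (s' k) (RH' k) (T' k) he (Hm k) (Heta' k)).
have S3 : \sum_(k < r) s k = \sum_(k < r) s' k by apply: eq_bigr => k _; rewrite Hs.
move: S1 S2 S3; rewrite !big_ord_recr /=.
rewrite (eq_bigr (fun i : 'I_e' => \sum_(k < r) T' k i)); last first.
  by move=> i _; apply: small; rewrite /= ltnS ltn_ord.
move: (\sum_(k < r) s k) (\sum_(k < r) s' k) (\sum_(i < e') \sum_(k < r) T' k i) => a b c.
move: (\sum_(k < r) T k e') (\sum_(k < r) T' k e') => x y.
lia.
Qed.


Lemma rescount_same e r (mu mu' : 'I_r -> seq nat) s RH RH' T : (0 < e)%N ->
  is_multipartition mu -> is_multipartition mu' ->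
  (forall k, eta_rel e (mu k) (s k) (RH k) (T k)) ->
  (forall k, eta_rel e (mu' k) (s k) (RH' k) (T k)) ->
  \sum_(k < r) (eweight e (RH k))%:Z = \sum_(k < r) (eweight e (RH' k))%:Z ->
  forall j, (j < e)%N -> rescount e mu s j = rescount e mu' s j.
Proof.
move=> he Hm Hm' Heta Heta' Hew j hj.
have [M HM] := pick_M r (fun k => cb e (mu k) (s k) (RH k) (T k))
                        (fun k => cb e (mu' k) (s k) (RH' k) (T k)).
have : (rescount e mu s j)%:Z = (rescount e mu' s j)%:Z.
  rewrite (multi_formula e r mu s RH T M j) //; last by move=> k; case: (HM k).
  rewrite (multi_formula e r mu' s RH' T M j) //; last by move=> k; case: (HM k).
  by rewrite !sumrB !big_split /= Hew.
by case.
Qed.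

Lemma msize_rescount e r (mu : 'I_r -> seq nat) s : (0 < e)%N ->
  msize mu = (\sum_(j < e) rescount e mu s j)%N.
Proof.
move=> he; rewrite /msize (eq_bigr (fun k => \sum_(j < e) rc e (mu k) (s k) j)%N).
  by rewrite exchange_big.
by move=> k _; rewrite (F6 e (mu k) (s k) he).
Qed.

Lemma eweight_upd e rho i0 p : (i0 < e)%N ->
  (eweight e (fun i => if i == i0 then p else rho i))%:Z =
  (eweight e rho)%:Z - (psize (rho i0))%:Z + (psize p)%:Z.
Proof.
move=> hi0; rewrite /eweight (bigD1 (Ordinal hi0)) //= eqxx.
rewrite [X in _ = X%:Z - _ + _](bigD1 (Ordinal hi0)) //=.
rewrite (eq_bigr (fun i : 'I_e => psize (rho i))); last first.
  move=> i /eqP hi; case: eqP => // h; exfalso; apply: hi; exact: val_inj.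
move: (\sum_(i < e | i != Ordinal hi0) psize (rho i))%N => a.
lia.
Qed.

Definition prow (m : nat) : seq nat := if m is 0%N then [::] else [:: m].

Lemma row_part m : is_partition (prow m).
Proof. by case: m. Qed.

Lemma row_size m : psize (prow m) = m.
Proof. by case: m => //= m; rewrite /psize /= addn0. Qed.


Theorem lemma3p17 (e r : nat) (he : (2 <= e)%N) (hr : (1 <= r)%N)
    (lam : 'I_r -> seq nat) (s : 'I_r -> int)
    (hlam : is_multipartition lam)
    (hR : rouquier_block e lam s) (hnc : ~ core_block e lam s)
    (rho : 'I_r -> nat -> seq nat) (t : 'I_r -> nat -> int)
    (heta : forall k, eta_rel e (lam k) (s k) (rho k) (t k)) :
  forall i : nat, (i.+1 < e)%N ->
    0 <= \sum_(k < r) t k i.+1 - \sum_(k < r) t k i.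
Proof.
move=> i hi.
have he0 : (0 < e)%N by lia.
have [mu [s' [Hmu [Hbe [k0 [rho0 [t0 [Heta0 Hw0]]]]]]]] :
  exists mu s', is_multipartition mu /\ block_equiv e lam s mu s' /\
   exists k0 rho0 t0, eta_rel e (mu k0) (s' k0) rho0 t0 /\ eweight e rho0 <> 0%N.
  apply NNPP; intro H; apply: hnc; rewrite /core_block /weight_zero => mu s' Hmu Hbe k rho0 t0 Heta.
  apply NNPP; intro Hw; apply: H; exists mu, s'; split => //; split => //.
  by exists k, rho0, t0.
have [D HD] : exists D : 'I_r -> (nat -> seq nat) * (nat -> int), forall k,
    eta_rel e (mu k) (s' k) (D k).1 (D k).2 /\ (k = k0 -> eweight e (D k).1 <> 0%N).
  apply (@fin_all_exists _ (fun _ => ((nat -> seq nat) * (nat -> int))%type)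
    (fun k p => eta_rel e (mu k) (s' k) p.1 p.2 /\ (k = k0 -> eweight e p.1 <> 0%N))).
  move=> k; case: (eqVneq k k0) => [->|hk].
    by exists (rho0, t0); split.
  have [rr [tt H]] := eta_exists e he0 (mu k) (s' k).
  exists (rr, tt); split => // E; by rewrite E eqxx in hk.
pose RM := fun k => (D k).1; pose TM := fun k => (D k).2.
have HetaM : forall k, eta_rel e (mu k) (s' k) (RM k) (TM k) by move=> k; case: (HD k).
have HRouq := hR mu s' Hmu Hbe.
have diff : forall k, 0 <= TM k i.+1 - TM k i.
  move=> k; case: (eqVneq k k0) => [->|hk].
    have := HRouq k0 (RM k0) (TM k0) (HetaM k0) i hi.
    have := (HD k0).2 erefl; rewrite -/(RM k0).
    move: (eweight e (RM k0)) (TM k0 i.+1) (TM k0 i) => a b c; lia.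
  have [i0 [hi0 hpos]] : exists i0, (i0 < e)%N /\ (0 < psize (RM k0 i0))%N.
    apply NNPP; intro H; apply: ((HD k0).2 erefl); rewrite -/(RM k0) /eweight big1 // => j _.
    apply/eqP; rewrite -leqn0 leqNgt; apply/negP => hj; apply: H; exists j; split => //.
  have HpM : forall k' j, (j < e)%N -> is_partition (RM k' j).
    by move=> k' j hj; case: (HetaM k' j hj).
  pose Rk := fun j => if j == 0%N then prow (psize (RM k 0%N)).+1 else RM k j.
  pose Rk0 := fun j => if j == i0 then prow (psize (RM k0 i0)).-1 else RM k0 j.
  have Hpk : forall j, (j < e)%N -> is_partition (Rk j).
    by move=> j hj; rewrite /Rk; case: eqP => _; [exact: row_part | exact: HpM].
  have Hpk0 : forall j, (j < e)%N -> is_partition (Rk0 j).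
    by move=> j hj; rewrite /Rk0; case: eqP => _; [exact: row_part | exact: HpM].
  have [lk [ck [Hlk Hetak]]] := enc e he0 Rk (TM k) Hpk.
  have [lk0 [ck0 [Hlk0 Hetak0]]] := enc e he0 Rk0 (TM k0) Hpk0.
  have Eck : ck = s' k.
    by rewrite (I1 e lk ck Rk (TM k) he0 Hlk Hetak) (I1 e (mu k) (s' k) (RM k) (TM k) he0 (Hmu k) (HetaM k)).
  have Eck0 : ck0 = s' k0.
    by rewrite (I1 e lk0 ck0 Rk0 (TM k0) he0 Hlk0 Hetak0) (I1 e (mu k0) (s' k0) (RM k0) (TM k0) he0 (Hmu k0) (HetaM k0)).
  subst ck ck0.
  pose mu' := fun k' => if k' == k then lk else if k' == k0 then lk0 else mu k'.
  pose RM' := fun k' => if k' == k then Rk else if k' == k0 then Rk0 else RM k'.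
  have Heta' : forall k', eta_rel e (mu' k') (s' k') (RM' k') (TM k').
    move=> k'; rewrite /mu' /RM'; case: (eqVneq k' k) => [->//|h1].
    by case: (eqVneq k' k0) => [->//|h2].
  have Hmu' : is_multipartition mu'.
    move=> k'; rewrite /mu'; case: (eqVneq k' k) => [//|h1].
    by case: (eqVneq k' k0) => [//|h2].
  have ewk : (eweight e Rk)%:Z = (eweight e (RM k))%:Z + 1.
    rewrite (eweight_upd e (RM k) 0%N _ he0) row_size; lia.
  have ewk0 : (eweight e Rk0)%:Z = (eweight e (RM k0))%:Z - 1.
    rewrite (eweight_upd e (RM k0) i0 _ hi0) row_size; lia.
  have Hew : \sum_(k' < r) (eweight e (RM k'))%:Z = \sum_(k' < r) (eweight e (RM' k'))%:Z.
    rewrite (bigD1 k) // [in RHS](bigD1 k) //= (bigD1 k0) /=; last by rewrite eq_sym hk.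
    rewrite [in RHS](bigD1 k0) /=; last by rewrite eq_sym hk.
    rewrite /RM' eqxx (eq_sym k0 k) (negbTE hk) eqxx ewk ewk0.
    rewrite [X in _ = _ + (_ + X)](eq_bigr (fun k' => (eweight e (RM k'))%:Z)).
      move: (\sum_(k' < r | (k' != k) && (k' != k0)) (eweight e (RM k'))%:Z) => a; lia.
    by move=> k' /andP [/negbTE -> /negbTE ->].
  have Hrc := rescount_same e r mu mu' s' RM RM' TM he0 Hmu Hmu' HetaM Heta' Hew.
  have Hbe' : block_equiv e lam s mu' s'.
    case: Hbe => [Hs [Hsz Hr0]]; split => //; split.
      rewrite Hsz (msize_rescount e r mu s' he0) (msize_rescount e r mu' s' he0).
      by apply: eq_bigr => j _; apply: Hrc.
    by move=> j hj; rewrite Hr0 // Hrc.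
  have := hR mu' s' Hmu' Hbe' k (RM' k) (TM k) (Heta' k) i hi.
  rewrite {1}/RM' eqxx ewk.
  move: (eweight e (RM k)) (TM k i.+1) (TM k i) => a b c; lia.
have Hinv := tsum_inv e r lam mu s s' rho t RM TM he0 hlam Hmu Hbe heta HetaM.
rewrite (Hinv i.+1 hi) (Hinv i (ltnW hi)) -sumrB.
by apply: sumr_ge0 => k _; apply: diff.
Qed.
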